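(* Let $k$ be a commutative ring, $A$ a commutative $k$-algebra, and $(A,\mathfrak g_{A/k},\alpha)$ a Lie algebroid. Let $S^\cdot=\bigoplus_{i\ge 0}S^i$ be a graded $\mathfrak g_{A/k}$-algebra which is noetherian, and let $M^\cdot$ be a graded $(S^\cdot,\mathfrak g_{A/k})$-module which is of finite type over $S^\cdot$. Denote by $\bar S^\cdot=(S^\cdot)^{\mathfrak g_{A/k}}$ and $\bar M^\cdot=(M^\cdot)^{\mathfrak g_{A/k}}$ the invariants. (1) Assume that $S^\cdot$ is semi-simple as a $\mathfrak g_{A/k}$-module and that $\bar S^0$ is a noetherian ring. Then $\bar S^\cdot$ is a graded noetherian subring of $S^\cdot$. (2) Assume the hypotheses of (1) and in addition that $M^\cdot$ is semi-simple as a $\mathfrak g_{A/k}$-module. Then $\bar M^\cdot$ is of finite type over $\bar S^\cdot$.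
   Context: $T_{A/k}$ denotes the $A$-module (and $k$-Lie algebra) of $k$-linear derivations of $A$. A Lie algebroid $(A,\mathfrak g_{A/k},\alpha)$ consists of an $A$-module of finite type $\mathfrak g_{A/k}$ with a $k$-bilinear Lie bracket $[\cdot,\cdot]$ and a map $\alpha:\mathfrak g_{A/k}\to T_{A/k}$ which is a homomorphism of Lie algebras and of $A$-modules, such that $[\delta,a\eta]=\alpha(\delta)(a)\eta+a[\delta,\eta]$ for $a\in A$, $\delta,\eta\in\mathfrak g_{A/k}$. A $\mathfrak g_{A/k}$-module is an $A$-module $M$ with a $k$-Lie algebra homomorphism $f:\mathfrak g_{A/k}\to \mathrm{End}_k(M)$ such that $f(a\delta)(m)=af(\delta)(m)$ and $f(\delta)(am)=\alpha(\delta)(a)m+af(\delta)(m)$. A $\mathfrak g_{A/k}$-module is semi-simple if it is a direct sum of simple $\mathfrak g_{A/k}$-modules (equivalently every $\mathfrak g_{A/k}$-submodule is a direct summand). A graded $\mathfrak g_{A/k}$-algebra is a graded commutative $A$-algebra $S^\cdot=\bigoplus_{i\ge0}S^i$ which is a $\mathfrak g_{A/k}$-module via a homomorphism of $A$-modules and Lie algebras $\phi:\mathfrak g_{A/k}\to T_{S^\cdot/k}$ with $\phi(\delta)(S^i)\subset S^i$ for all $\delta,i$. A graded $(S^\cdot,\mathfrak g_{A/k})$-module is a graded $S^\cdot$-module $M^\cdot=\bigoplus_{i\in\mathbb Z}M^i$ which is also a $\mathfrak g_{A/k}$-module with $\delta M^i\subset M^i$ and $\delta(sm)=\delta(s)m+s\,\delta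 m$ for $s\in S^\cdot$, $m\in M^\cdot$, $\delta\in\mathfrak g_{A/k}$. For such a module, $\bar M^\cdot=\{m\in M^\cdot:\delta m=0\ \forall\delta\in\mathfrak g_{A/k}\}$; it is a graded $\bar S^\cdot$-module and $\bar S^\cdot=\bigoplus_i\bar S^i$ is a graded subring of $S^\cdot$. *)

(* Defs.v *)
From HB Require Import structures.
From mathcomp Require Import all_boot all_order all_algebra.
Set Implicit Arguments. Unset Strict Implicit. Unset Printing Implicit Defensive.
Import GRing.Theory.
Local Open Scope ring_scope.

Definition fin_gen (R : Type) (V : zmodType) (sc : R -> V -> V)
    (P : R -> Prop) (N : V -> Prop) : Prop :=
  exists gens : seq V,
    (forall i : 'I_(size gens), N gens`_i) /\
    forall v, N v -> exists c : 'I_(size gens) -> R,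
      (forall i, P (c i)) /\ v = \sum_(i < size gens) sc (c i) gens`_i.

Definition subring_pred (R : pzRingType) (P : R -> Prop) : Prop :=
  P 1 /\ forall x y, P x -> P y -> P (x - y) /\ P (x * y).

Definition ideal_of (R : pzRingType) (P J : R -> Prop) : Prop :=
  [/\ forall x, J x -> P x, J 0,
      forall x y, J x -> J y -> J (x + y) &
      forall r x, P r -> J x -> J (r * x)].

(* The (commutative) ring with carrier [P] is noetherian: every ideal
   is finitely generated.  [noetherian_sub (fun _ => True)] says that the
   ring [R] itself is noetherian. *)
Definition noetherian_sub (R : comPzRingType) (P : R -> Prop) : Prop :=
  forall J : R -> Prop, ideal_of P J -> fin_gen *%R P J.

Definition direct_sum (I : eqType) (V : zmodType) (G : I -> V -> Prop) : Prop :=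
  (forall v, exists (s : seq I) (c : I -> V),
     [/\ uniq s, forall i, G i (c i) & v = \sum_(i <- s) c i]) /\
  (forall (s : seq I) (c : I -> V), uniq s -> (forall i, i \in s -> G i (c i)) ->
     \sum_(i <- s) c i = 0 -> forall i, i \in s -> c i = 0).

Definition graded_sub (I : eqType) (V : zmodType) (G : I -> V -> Prop)
    (P : V -> Prop) : Prop :=
  forall v, P v -> exists (s : seq I) (c : I -> V),
     [/\ uniq s, forall i, P (c i) /\ G i (c i) & v = \sum_(i <- s) c i].

Definition kderivation (K : Type) (R : pzRingType) (ks : K -> R -> R)
    (D : R -> R) : Prop :=
  [/\ forall x y, D (x + y) = D x + D y,
      forall c x, D (ks c x) = ks c (D x) &
      forall x y, D (x * y) = D x * y + x * D y].

Section LieAlgebroid.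
Variables (k : comPzRingType) (A : comAlgType k).

Definition lie_algebroid (g : lmodType A) (br : g -> g -> g)
    (alpha : g -> A -> A) : Prop :=
  fin_gen *:%R (fun _ : A => True) (fun _ : g => True) /\
  [/\
      [/\ forall x y z, br (x + y) z = br x z + br y z,
          forall x y z, br x (y + z) = br x y + br x z,
          forall (c : k) x y, br ((c%:A : A) *: x) y = (c%:A : A) *: br x y,
          forall (c : k) x y, br x ((c%:A : A) *: y) = (c%:A : A) *: br x y &
          ((forall x, br x x = 0) /\
           (forall x y z, br x (br y z) + br y (br z x) + br z (br x y) = 0))],
      forall d, kderivation (fun (c : k) (a : A) => c *: a) (alpha d),
      ((forall d e a, alpha (d + e) a = alpha d a + alpha e a) /\
       (forall (b : A) d a, alpha (b *: d) a = b * alpha d a)),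
      (forall d e a, alpha (br d e) a = alpha d (alpha e a) - alpha e (alpha d a)) &
      (forall d e (b : A), br d (b *: e) = alpha d b *: e + b *: br d e)].

Variables (g : lmodType A) (br : g -> g -> g) (alpha : g -> A -> A).

Definition gmodule (M : zmodType) (sc : A -> M -> M) (f : g -> M -> M) : Prop :=
  [/\ (forall d m m', f d (m + m') = f d m + f d m') /\
        (forall d (c : k) m, f d (sc c%:A m) = sc c%:A (f d m)),
      forall d e m, f (d + e) m = f d m + f e m,
      forall (a : A) d m, f (a *: d) m = sc a (f d m),
      forall d e m, f (br d e) m = f d (f e m) - f e (f d m) &
      forall d (a : A) m, f d (sc a m) = sc (alpha d a) m + sc a (f d m)].

Definition gsubmodule (M : zmodType) (sc : A -> M -> M) (f : g -> M -> M)
    (N : M -> Prop) : Prop :=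
  [/\ N 0, forall x y, N x -> N y -> N (x + y),
      forall a x, N x -> N (sc a x) & forall d x, N x -> N (f d x)].

Definition simple_gsubmodule (M : zmodType) (sc : A -> M -> M)
    (f : g -> M -> M) (N : M -> Prop) : Prop :=
  [/\ gsubmodule sc f N, exists x, N x /\ x <> 0 &
      forall N' : M -> Prop, gsubmodule sc f N' -> (forall x, N' x -> N x) ->
        (forall x, N' x -> x = 0) \/ (forall x, N x -> N' x)].

Definition semisimple_gmodule (M : zmodType) (sc : A -> M -> M)
    (f : g -> M -> M) : Prop :=
  exists (I : eqType) (N : I -> M -> Prop),
    (forall i, simple_gsubmodule sc f (N i)) /\ direct_sum N.

Definition invariants (M : Type) (z : M) (f : g -> M -> M) : M -> Prop :=
  fun m => forall d, f d m = z.

Definition graded_galgebra (S : comAlgType A) (SG : nat -> S -> Prop)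
    (phi : g -> S -> S) : Prop :=
  [/\ forall i, [/\ SG i 0, forall x y, SG i x -> SG i y -> SG i (x + y) &
                    forall (a : A) x, SG i x -> SG i (a *: x)],
      SG 0%N 1 /\ (forall i j x y, SG i x -> SG j y -> SG (i + j)%N (x * y)),
      direct_sum SG &
      [/\ forall d, kderivation (fun (c : k) (s : S) => (c%:A : A) *: s) (phi d),
          gmodule (fun (a : A) (s : S) => a *: s) phi &
          forall d i s, SG i s -> SG i (phi d s)]].

Definition graded_Sg_module (S : comAlgType A) (SG : nat -> S -> Prop)
    (phi : g -> S -> S) (M : lmodType S) (MG : int -> M -> Prop)
    (f : g -> M -> M) : Prop :=
  [/\ forall i, MG i 0 /\ (forall x y, MG i x -> MG i y -> MG i (x + y)),
      forall i j s m, SG i s -> MG j m -> MG (i%:Z + j) (s *: m),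
      direct_sum MG,
      gmodule (fun (a : A) (m : M) => (a%:A : S) *: m) f &
      (forall d i m, MG i m -> MG i (f d m)) /\
      (forall d (s : S) (m : M), f d (s *: m) = phi d s *: m + s *: f d m)].

End LieAlgebroid.

(* Main.v *)
Require Import Defs.
From HB Require Import structures.
From mathcomp Require Import all_boot all_order all_algebra.
Set Implicit Arguments. Unset Strict Implicit. Unset Printing Implicit Defensive.
Import GRing.Theory.
Local Open Scope ring_scope.

Section Gen.
Variables (S : pzRingType) (T : zmodType) (mul : S -> T -> T).
Hypothesis mulDl : forall a b x, mul (a + b) x = mul a x + mul b x.
Hypothesis mulDr : forall a x y, mul a (x + y) = mul a x + mul a y.
Hypothesis mulA : forall a b x, mul a (mul b x) = mul (a * b) x.
Hypothesis mul1 : forall x, mul 1 x = x.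

Lemma mul0 x : mul 0 x = 0.
Proof. have h := mulDl 0 0 x; rewrite addr0 in h.
by apply: (@addrI _ (mul 0 x)); rewrite addr0 -h. Qed.
Lemma mulr0' a : mul a 0 = 0.
Proof. have h := mulDr a 0 0; rewrite addr0 in h.
by apply: (@addrI _ (mul a 0)); rewrite addr0 -h. Qed.

Fixpoint spanQ (l : seq ((S -> Prop) * T)) (t : T) : Prop :=
  match l with
  | (Q, x) :: l' => exists c t', [/\ Q c, spanQ l' t' & t = mul c x + t']
  | [::] => t = 0
  end.

Definition lspan (P : S -> Prop) (L : seq T) := spanQ (map (fun x => (P, x)) L).

Lemma spanQ_cat l1 l2 a b : spanQ l1 a -> spanQ l2 b -> spanQ (l1 ++ l2) (a + b).
Proof.
elim: l1 a => [|[Q x] l1 IH] a /=; first by move=> -> ?; rewrite add0r.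
move=> [c [t' [Qc Ht ->]]] Hb; exists c, (t' + b); split => //; first exact: IH.
by rewrite addrA.
Qed.

Lemma lspan_cat P L1 L2 a b : lspan P L1 a -> lspan P L2 b -> lspan P (L1 ++ L2) (a + b).
Proof. by rewrite /lspan map_cat; apply: spanQ_cat. Qed.

Lemma lspan0 P L : P 0 -> lspan P L 0.
Proof.
move=> P0; elim: L => [|x L IH] //=; exists 0, 0; split => //.
by rewrite mul0 addr0.
Qed.

Lemma lspanD P L a b : (forall x y, P x -> P y -> P (x + y)) ->
  lspan P L a -> lspan P L b -> lspan P L (a + b).
Proof.
move=> PD; elim: L a b => [|x L IH] a b /=; first by move=> -> ->; rewrite addr0.
move=> [c [t [Pc Ht ->]]] [c' [t' [Pc' Ht' ->]]].
exists (c + c'), (t + t'); split; [exact: PD|exact: IH|].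
by rewrite mulDl addrACA.
Qed.

Lemma lspanM P L r a : (forall c, P c -> P (r * c)) ->
  lspan P L a -> lspan P L (mul r a).
Proof.
move=> PM; elim: L a => [|x L IH] a /=; first by move=> ->; rewrite mulr0'.
move=> [c [t [Pc Ht ->]]]; exists (r * c), (mul r t); split; [exact: PM|exact: IH|].
by rewrite mulDr mulA.
Qed.

Lemma lspan_mem (P : S -> Prop) (L : seq T) x c :
  P 0 -> x \in L -> P c -> lspan P L (mul c x).
Proof.
move=> P0; elim: L => [|y L IH] //= /[!inE]; case: eqP => [-> _|_ /= xL] Pc.
  by exists c, 0; split => //; [exact: lspan0|rewrite addr0].
by exists 0, (mul c x); split => //; [exact: IH|rewrite mul0 add0r].
Qed.

Lemma lspan_sub (G L : seq T) v : lspan (fun _ => True) G v ->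
  (forall y, y \in G -> lspan (fun _ => True) L y) -> lspan (fun _ => True) L v.
Proof.
elim: G v => [|y G IH] v /=; first by move=> -> _; exact: lspan0.
move=> [c [t [_ Ht ->]]] HG; apply: lspanD => //.
  by apply: lspanM => //; apply: HG; rewrite inE eqxx.
by apply: IH => // z zG; apply: HG; rewrite inE zG orbT.
Qed.

Lemma lspan_self y : lspan (fun _ => True) [:: y] y.
Proof. by exists 1, 0; split => //; rewrite mul1 addr0. Qed.

Lemma lspan_fin (P : S -> Prop) (L : seq T) v : P 0 ->
  lspan P L v <-> exists c : 'I_(size L) -> S, (forall i, P (c i)) /\
     v = \sum_(i < size L) mul (c i) L`_i.
Proof.
move=> P0; elim: L v => [|x L IH] v /=.
  split; first by move=> ->; exists (fun _ => 0); split => //; rewrite big_ord0.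
  by move=> [c [_ ->]]; rewrite big_ord0.
split.
  move=> [c0 [t [Pc0 /IH [c [Pc ->]] ->]]].
  exists (fun i => if unlift ord0 i is Some j then c j else c0); split.
    by move=> i; case: unlift.
  rewrite big_ord_recl unlift_none; congr (_ + _); apply: eq_bigr => i _.
  by rewrite liftK.
move=> [c [Pc ->]]; rewrite big_ord_recl.
exists (c ord0), (\sum_(i < size L) mul (c (lift ord0 i)) L`_i); split => //.
by apply/IH; exists (fun i => c (lift ord0 i)).
Qed.

End Gen.

Fixpoint allP (X : Type) (P : X -> Prop) (l : seq X) : Prop :=
  match l with [::] => True | x :: l => P x /\ allP P l end.

Lemma allP_sub (X : Type) (P P' : X -> Prop) l :
  (forall x, P x -> P' x) -> allP P l -> allP P' l.
Proof. by move=> H; elim: l => [|x l IH] //= [/H ? /IH]. Qed.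

Lemma additive0 (U V : zmodType) (h : U -> V) :
  (forall x y, h (x + y) = h x + h y) -> h 0 = 0.
Proof. move=> hD; have := hD 0 0; rewrite addr0 => e.
by apply: (@addrI _ (h 0)); rewrite addr0 -e. Qed.

Section Core.
Variables (k : comPzRingType) (A : comAlgType k) (g : lmodType A).
Variables (S : pzRingType) (T : zmodType) (mul : S -> T -> T) (scS : A -> S -> S)
  (phi : g -> S -> S) (scT : A -> T -> T) (F : g -> T -> T).
Hypothesis mulDl : forall a b x, mul (a + b) x = mul a x + mul b x.
Hypothesis FD : forall d x y, F d (x + y) = F d x + F d y.
Hypothesis phiD : forall d x y, phi d (x + y) = phi d x + phi d y.
Hypothesis Fmul : forall d c x, F d x = 0 -> F d (mul c x) = mul (phi d c) x.
Hypothesis scmul : forall a c x, mul (scS a c) x = scT a (mul c x).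
Hypothesis scTD : forall a x y, scT a (x + y) = scT a x + scT a y.
Hypothesis scTN : forall t, scT (-1) t = - t.

Definition goodP (p : (S -> Prop) * T) :=
  gsubmodule scS phi p.1 /\ forall d, F d p.2 = 0.

Lemma spanQ_closed l : allP goodP l ->
  [/\ spanQ mul l 0, forall a b, spanQ mul l a -> spanQ mul l b -> spanQ mul l (a + b),
      forall a t, spanQ mul l t -> spanQ mul l (scT a t) &
      forall d t, spanQ mul l t -> spanQ mul l (F d t)].
Proof.
elim: l => [|[Q x] l IH] /=.
  split => //; first by move=> a b -> ->; rewrite addr0.
    by move=> a t ->; apply: additive0.
  by move=> d t ->; apply: additive0.
move=> [[[Q0 QD QZ QF] /= Fx] /IH [l0 lD lZ lF]]; split.
- by exists 0, 0; split => //; rewrite mul0 // addr0.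
- move=> a b [c [t [Qc Ht ->]]] [c' [t' [Qc' Ht' ->]]].
  by exists (c + c'), (t + t'); split; [exact: QD|exact: lD|rewrite mulDl addrACA].
- move=> a _ [c [t [Qc Ht ->]]].
  by exists (scS a c), (scT a t); split; [exact: QZ|exact: lZ|rewrite scTD scmul].
- move=> d _ [c [t [Qc Ht ->]]].
  by exists (phi d c), (F d t); split; [exact: QF|exact: lF|rewrite FD Fmul].
Qed.

Lemma spanQN l t : allP goodP l -> spanQ mul l t -> spanQ mul l (- t).
Proof. by move=> /spanQ_closed [_ _ lZ _] /(lZ (-1)); rewrite scTN. Qed.

Definition invP (p : (S -> Prop) * T) :=
  (fun c => p.1 c /\ forall d, phi d c = 0, p.2).

Lemma inv_lift l y :
  allP (fun p => simple_gsubmodule scS phi p.1 /\ forall d, F d p.2 = 0) l ->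
  spanQ mul l y -> (forall d, F d y = 0) -> spanQ mul (map invP l) y.
Proof.
elim: l y => [|[Q x] l IH] y //=.
move=> [[[QG _ Qsimple] Fx] Hl] [c [t [Qc Ht ->]]] Fy.
have Hl' : allP goodP l.
  by apply: allP_sub Hl => p [[? _ _] ?].
have [l0 lD lZ lF] := spanQ_closed Hl'.
have Hl'' : allP (fun p => simple_gsubmodule scS phi p.1 /\ forall d, F d p.2 = 0) l by [].
case: QG => [Q0 QD QZ QF].
pose Qs := fun n => Q n /\ spanQ mul l (mul n x).
have QsG : gsubmodule scS phi Qs.
  split.
  - by split => //; rewrite mul0.
  - by move=> a b [Qa Ha] [Qb Hb]; split; [exact: QD|rewrite mulDl; exact: lD].
  - by move=> a n [Qn Hn]; split; [exact: QZ|rewrite scmul; exact: lZ].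
  - by move=> d n [Qn Hn]; split; [exact: QF|rewrite -Fmul //; exact: lF].
have [Qs0|QsAll] := Qsimple Qs QsG (fun n (h : Qs n) => proj1 h).
  have phic : forall d, phi d c = 0.
    move=> d; apply: Qs0; split; first exact: QF.
    have := Fy d; rewrite FD Fmul // => /eqP; rewrite addr_eq0 => /eqP ->.
    exact: spanQN (lF _ _ Ht).
  exists c, t; split => //; apply: IH => // d.
  have := Fy d; by rewrite FD Fmul // phic mul0 // add0r.
have [_ Hcx] := QsAll c Qc.
exists 0, (mul c x + t); split => //; last by rewrite mul0 // add0r.
  split => // d; exact: additive0.
by apply: IH => //; exact: lD.
Qed.

Lemma mul_sum (I : Type) (r : seq I) (cc : I -> S) x :
  mul (\sum_(i <- r) cc i) x = \sum_(i <- r) mul (cc i) x.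
Proof.
elim: r => [|i r IH]; first by rewrite !big_nil mul0.
by rewrite !big_cons mulDl IH.
Qed.

Lemma lift_gen (I : eqType) (N : I -> S -> Prop) (L : seq T) y :
  (forall v, exists (s0 : seq I) (c : I -> S),
     [/\ uniq s0, forall i, N i (c i) & v = \sum_(i <- s0) c i]) ->
  (forall i, simple_gsubmodule scS phi (N i)) ->
  (forall x, x \in L -> forall d, F d x = 0) ->
  lspan mul (fun _ => True) L y -> (forall d, F d y = 0) ->
  lspan mul (fun c => forall d, phi d c = 0) L y.
Proof.
move=> Hdec Hsimp HL Hy Fy.
have [l [Hl Hall]] : exists l, spanQ mul l y /\ allP (fun p => (exists i, p.1 = N i) /\ p.2 \in L) l.
  elim: L y HL Hy {Fy} => [|x L IH] y HL /=.
    by move=> ->; exists [::].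
  move=> [c [t [_ Ht ->]]].
  have [l [Hl Hall]] := IH t (fun z zL => HL z (mem_behead (s := x :: L) zL)) Ht.
  have [s0 [cc [_ Ncc ->]]] := Hdec c.
  exists (map (fun i => (N i, x)) s0 ++ l); split.
    apply: spanQ_cat => //; rewrite mul_sum.
    elim: (s0) => [|i r IHr] /=; first by rewrite big_nil.
    by exists (cc i), (\sum_(j <- r) mul (cc j) x); split => //; rewrite big_cons.
  have : allP (fun p => (exists i, p.1 = N i) /\ p.2 \in x :: L) l.
    by apply: allP_sub Hall => p [? H]; split => //; rewrite inE H orbT.
  elim: (s0) => [|i r IHr] //= H; split; last exact: IHr.
  by split; [exists i|rewrite inE eqxx].
have Hl2 := inv_lift (l := l) _ Hl Fy.
have H3 : spanQ mul (map invP l) y.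
  apply: Hl2; apply: allP_sub Hall => p [[i ->] pL]; split => //.
  exact: HL.
have : allP (fun p => (forall c, p.1 c -> forall d, phi d c = 0) /\ p.2 \in L) (map invP l).
  by elim: (l) Hall => [|p l' IHl] //= [[_ pL] /IHl ?]; split => //; split => // c [].
clear Hy Hl2 Hl Fy; elim: (map invP l) y H3 => [|[Q x] l' IHl] y /=; first by move=> -> _; apply: (lspan0 mulDl) => d; exact: (additive0 (phiD d)).
move=> [c [t [Qc Ht ->]]] [[HQ xL] Hl'].
apply: (lspanD mulDl).
- by move=> a b Ha Hb d; rewrite phiD Ha Hb addr0.
- apply: (lspan_mem mulDl) => //; [by move=> d; exact: (additive0 (phiD d))|exact: HQ].
- exact: IHl.
Qed.

End Core.

Section Noeth.
Variables (S : comPzRingType) (T : zmodType) (mul : S -> T -> T).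
Hypothesis mulDl : forall a b x, mul (a + b) x = mul a x + mul b x.
Hypothesis mulDr : forall a x y, mul a (x + y) = mul a x + mul a y.
Hypothesis mulA : forall a b x, mul a (mul b x) = mul (a * b) x.
Hypothesis mul1 : forall x, mul 1 x = x.
Hypothesis HSnoeth : noetherian_sub (fun _ : S => True).

Lemma mulN1 x : mul (-1) x = - x.
Proof.
apply: (@addrI _ (mul 1 x)); rewrite -mulDl subrr mul0 // mul1 subrr //.
Qed.

Lemma fin_gen_list (U : zmodType) (m : S -> U -> U) (J : U -> Prop) :
  (forall a b x, m (a + b) x = m a x + m b x) ->
  fin_gen m (fun _ => True) J ->
  exists gs : seq U, (forall x, x \in gs -> J x) /\
     forall v, J v -> lspan m (fun _ => True) gs v.
Proof.
move=> m0 [gs [Hgs Hv]]; exists gs; split.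
  move=> x xg; have := Hgs (Ordinal (etrans (index_mem x gs) xg)).
  by rewrite /= nth_index.
move=> v /Hv [c [_ ->]]; apply/(@lspan_fin _ _ m) => //.
by exists c.
Qed.

Lemma choose_pairs (R : S -> T -> Prop) (gs : seq S) :
  (forall x, x \in gs -> exists t, R x t) ->
  exists W : seq (S * T), map fst W = gs /\ allP (fun w => R w.1 w.2) W.
Proof.
elim: gs => [|x gs IH] H; first by exists [::].
have [t Ht] := H x (mem_head _ _).
have [W [<- HW]] := IH (fun z zg => H z (mem_behead (s := x :: gs) zg)).
by exists ((x, t) :: W).
Qed.

Lemma lspan_in (P : T -> Prop) L t : P 0 -> (forall a b, P a -> P b -> P (a + b)) ->
  (forall r a, P a -> P (mul r a)) -> (forall x, x \in L -> P x) ->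
  lspan mul (fun _ => True) L t -> P t.
Proof.
move=> P0 PD PM; elim: L t => [|x L IH] t /=; first by move=> _ ->.
move=> HL [c [t' [_ Ht ->]]]; apply: PD; first by apply: PM; apply: HL; exact: mem_head.
by apply: IH => // z zL; apply: HL; rewrite inE zL orbT.
Qed.

Lemma noeth_mod (G : seq T) : forall P : T -> Prop, P 0 ->
  (forall a b, P a -> P b -> P (a + b)) -> (forall r a, P a -> P (mul r a)) ->
  (forall t, P t -> lspan mul (fun _ => True) G t) ->
  exists L, (forall x, x \in L -> P x) /\ forall t, P t -> lspan mul (fun _ => True) L t.
Proof.
have TD : forall x y : S, True -> True -> True by [].
have TM : forall r c : S, True -> True by [].
elim: G => [|g G' IH] P P0 PD PM HG.
  exists [::]; split => // t /HG /= ->; exact: lspan0.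
pose Iid := fun s => exists t, P (mul s g + t) /\ lspan mul (fun _ => True) G' t.
have Iideal : ideal_of (fun _ => True) Iid.
  split => //.
  - by exists 0; split; [rewrite mul0 // addr0|exact: lspan0].
  - move=> x y [t [Pt Ht]] [t' [Pt' Ht']]; exists (t + t'); split.
      by rewrite mulDl addrACA; apply: PD.
    exact: lspanD.
  - move=> r x _ [t [Pt Ht]]; exists (mul r t); split.
      by rewrite -mulA -mulDr; apply: PM.
    exact: lspanM.
have [gs [Hgs Hv]] := fin_gen_list (@mulrDl S) (HSnoeth Iideal).
have [W [HW1 HW2]] := choose_pairs Hgs.
pose ps := map (fun w => mul w.1 g + w.2) W.
have key : forall s, lspan *%R (fun _ => True) (map fst W) s ->
   exists ts, lspan mul (fun _ => True) G' ts /\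
              lspan mul (fun _ => True) ps (mul s g + ts).
  rewrite /ps; elim: (W) HW2 => [|w W' IHW] /= HW s.
    by move=> ->; exists 0; split; [exact: lspan0|rewrite mul0 // addr0].
  case: HW => [[_ Hw2] HW'] [c [s' [_ Hs' ->]]].
  have [t' [Ht' Hp']] := IHW HW' s' Hs'.
  exists (mul c w.2 + t'); split; first by apply: lspanD => //; exact: lspanM.
  exists c, (mul s' g + t'); split => //.
  by rewrite mulDl mulDr -mulA addrACA.
have psP : forall x, x \in ps -> P x.
  move=> x /mapP [w wW ->].
  elim: (W) HW2 wW => [|w' W' IHW] //= [Hw' HW'].
  by rewrite inE => /orP [/eqP ->|]; [case: Hw'|exact: IHW].
pose P' := fun t => P t /\ lspan mul (fun _ => True) G' t.
have [L' [HL'1 HL'2]] : exists L', (forall x, x \in L' -> P' x) /\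
    forall t, P' t -> lspan mul (fun _ => True) L' t.
  apply: IH.
  - by split => //; exact: lspan0.
  - by move=> a b [Pa Ha] [Pb Hb]; split; [exact: PD|exact: lspanD].
  - by move=> r a [Pa Ha]; split; [exact: PM|exact: lspanM].
  - by move=> t [].
exists (ps ++ L'); split.
  by move=> x; rewrite mem_cat => /orP [/psP|/HL'1 []].
move=> u Pu; have /= [s [t'' [_ Ht'' Hu]]] := HG u Pu.
have Is : Iid s by exists t''; rewrite -Hu.
have := Hv s Is; rewrite -HW1 => /key [ts [Hts Hps]].
have -> : u = (mul s g + ts) + (t'' - ts) by rewrite Hu [t'' - ts]addrC addrA addrK.
apply: lspan_cat => //; apply: HL'2; split.
  have -> : t'' - ts = u + mul (-1) (mul s g + ts).
    by rewrite mulN1 Hu opprD addrACA subrr add0r.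
  apply: (PD) => //; apply: (PM); exact: (lspan_in P0 PD PM psP Hps).
rewrite -mulN1; apply: lspanD => //; exact: lspanM.
Qed.

End Noeth.

Section Collect.
Variables (S : pzRingType) (T : zmodType) (mul : S -> T -> T).
Hypothesis mulDl : forall a b x, mul (a + b) x = mul a x + mul b x.

Lemma collect (J : T -> Prop) (gs : seq T) :
  (forall x, x \in gs -> exists L, (forall z, z \in L -> J z) /\
      lspan mul (fun _ => True) L x) ->
  exists LL, (forall z, z \in LL -> J z) /\
      forall x, x \in gs -> lspan mul (fun _ => True) LL x.
Proof.
have TD : forall x y : S, True -> True -> True by [].
elim: gs => [|x gs IH] H; first by exists [::].
have [L [HL Hx]] := H x (mem_head _ _).
have [LL [HLL Hgs]] := IH (fun z zg => H z (mem_behead (s := x :: gs) zg)).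
exists (L ++ LL); split.
  by move=> z; rewrite mem_cat => /orP [/HL|/HLL].
move=> z; rewrite inE => /orP [/eqP ->|zg].
  by rewrite -[x]addr0; apply: lspan_cat => //; exact: lspan0.
by rewrite -[z]add0r; apply: lspan_cat => //; [exact: lspan0|exact: Hgs].
Qed.
End Collect.

Lemma additiveN (U V : zmodType) (h : U -> V) :
  (forall x y, h (x + y) = h x + h y) -> forall x, h (- x) = - h x.
Proof.
move=> hD x; apply: (@addrI _ (h x)); rewrite -hD !subrr; exact: additive0.
Qed.

Theorem mainTheorem1
  (k : comPzRingType) (A : comAlgType k)
  (g : lmodType A) (br : g -> g -> g) (alpha : g -> A -> A)
  (Hg : lie_algebroid br alpha)
  (S : comAlgType A) (SG : nat -> S -> Prop) (phi : g -> S -> S)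
  (HS : graded_galgebra br alpha SG phi)
  (HSnoeth : noetherian_sub (fun _ : S => True))
  (M : lmodType S) (MG : int -> M -> Prop) (f : g -> M -> M)
  (HM : graded_Sg_module br alpha SG phi MG f)
  (HMfin : fin_gen *:%R (fun _ : S => True) (fun _ : M => True)) :
  let barS := invariants 0 phi in
  let barM := invariants 0 f in
  (* (1) *)
  (semisimple_gmodule (fun (a : A) (s : S) => a *: s) phi ->
   noetherian_sub (fun s => barS s /\ SG 0%N s) ->
   [/\ subring_pred barS, graded_sub SG barS & noetherian_sub barS]) /\
  (* (2) *)
  (semisimple_gmodule (fun (a : A) (s : S) => a *: s) phi ->
   noetherian_sub (fun s => barS s /\ SG 0%N s) ->
   semisimple_gmodule (fun (a : A) (m : M) => (a%:A : S) *: m) f ->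
   fin_gen *:%R barS barM).
Proof.
move=> barS barM.
case: HS => HSG [HS1 HSmul] [HSds1 HSds2] [Hder Hgm HphiG].
case: HM => _ _ _ [[fD _] _ _ _ _] [HfG Hfs].
have phiD : forall d x y, phi d (x + y) = phi d x + phi d y.
  by move=> d; case: (Hder d).
have phiL : forall d x y, phi d (x * y) = phi d x * y + x * phi d y.
  by move=> d; case: (Hder d).
have phiN := fun d => additiveN (phiD d).
have phi0 := fun d => additive0 (phiD d).
have barS0 : barS 0 by move=> d; exact: phi0.
have barSD : forall x y, barS x -> barS y -> barS (x + y).
  by move=> x y Hx Hy d; rewrite phiD Hx Hy addr0.
have barSM : forall x y, barS x -> barS y -> barS (x * y).
  by move=> x y Hx Hy d; rewrite phiL Hx Hy mul0r mulr0 addr0.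
have liftS : forall (I : eqType) (N : I -> S -> Prop),
  (forall i, simple_gsubmodule (fun (a : A) (s : S) => a *: s) phi (N i)) ->
  direct_sum N -> forall L y, (forall x, x \in L -> barS x) ->
  lspan *%R (fun _ => True) L y -> barS y -> lspan *%R barS L y.
  move=> I N Hsimp [Hdec _] L y HL Hy Fy.
  have Fm : forall d (c x : S), phi d x = 0 -> phi d (c * x) = phi d c * x.
    by move=> d c x Fx; rewrite phiL Fx mulr0 addr0.
  have scm : forall (a : A) (c x : S), (a *: c) * x = a *: (c * x).
    by move=> a c x; rewrite scalerAl.
  have scD : forall (a : A) (x y : S), a *: (x + y) = a *: x + a *: y.
    by move=> ? ? ?; rewrite scalerDr.
  have scN : forall (t : S), (-1 : A) *: t = - t by move=> t; rewrite scaleN1r.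
  exact: (lift_gen (mul := *%R) (scS := fun (a : A) (s : S) => a *: s)
     (scT := fun (a : A) (s : S) => a *: s) (F := phi)
     (@mulrDl S) phiD phiD Fm scm scD scN Hdec Hsimp HL Hy Fy).
have liftM : forall (I : eqType) (N : I -> S -> Prop),
  (forall i, simple_gsubmodule (fun (a : A) (s : S) => a *: s) phi (N i)) ->
  direct_sum N -> forall (L : seq M) y, (forall x, x \in L -> barM x) ->
  lspan *:%R (fun _ => True) L y -> barM y -> lspan *:%R barS L y.
  move=> I N Hsimp [Hdec _] L y HL Hy Fy.
  have Fm : forall d (c : S) (x : M), f d x = 0 -> f d (c *: x) = phi d c *: x.
    by move=> d c x Fx; rewrite Hfs Fx scaler0 addr0.
  have scm : forall (a : A) (c : S) (x : M), (a *: c) *: x = (a%:A : S) *: (c *: x).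
    by move=> a c x; rewrite scalerA mulr_algl.
  have scD : forall (a : A) (x1 x2 : M), (a%:A : S) *: (x1 + x2) = (a%:A : S) *: x1 + (a%:A : S) *: x2.
    by move=> ? ? ?; rewrite scalerDr.
  have scN : forall (t : M), ((-1 : A)%:A : S) *: t = - t.
    by move=> t; rewrite scaleN1r scaleN1r.
  have := (lift_gen (mul := *:%R) (scS := fun (a : A) (s : S) => a *: s)
     (scT := fun (a : A) (m : M) => (a%:A : S) *: m) (F := f)
     (fun (a b : S) (x : M) => scalerDl x a b) fD phiD Fm scm scD scN Hdec Hsimp).
  exact.
split.
  move=> [I [N [Hsimp Hds]]] _; split.
  - split.
      move=> d; have := phiL d 1 1; rewrite !mulr1 !mul1r => e.
      by apply: (@addrI _ (phi d 1)); rewrite addr0 -e.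
    move=> x y Hx Hy; split; last exact: barSM.
    by move=> d; rewrite phiD phiN Hx Hy subr0.
  - move=> v Hv; have [s [c [us Hc Hvs]]] := HSds1 v.
    exists s, (fun i => if i \in s then c i else 0); split => //.
      move=> i; case: ifP => iis; last by split => //; case: (HSG i).
      split => // d.
      apply: (HSds2 s (fun i => phi d (c i))) => //.
        by move=> j _; apply: HphiG.
      rewrite -(big_morph (phi d) (phiD d) (phi0 d)) -Hvs; exact: Hv.
    by rewrite Hvs; apply: eq_big_seq => i ->.
  - move=> J [JS J0 JD JM].
    pose J' := fun t => exists L : seq S, (forall x, x \in L -> J x) /\
                   lspan *%R (fun _ => True) L t.
    have J'id : ideal_of (fun _ => True) J'.
      split => //.
      - by exists [::].
      - move=> x y [L1 [H1 Hx]] [L2 [H2 Hy]]; exists (L1 ++ L2); split.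
          by move=> z; rewrite mem_cat => /orP [/H1|/H2].
        exact: lspan_cat.
      - move=> r x _ [L [HL Hx]]; exists L; split => //.
        exact: (lspanM (@mulrDr S) (@mulrA S)).
    have [gs [Hgs Hv]] := fin_gen_list (@mulrDl S) (HSnoeth J' J'id).
    have [LL [HLL Hgs']] := collect (@mulrDl S) Hgs.
    exists LL; split.
      by move=> i; apply: HLL; exact: mem_nth.
    move=> y Jy; apply/(lspan_fin *%R (P := barS) LL y barS0).
    apply: (liftS I N Hsimp Hds).
    + by move=> z /HLL /JS.
    + apply: (lspan_sub (@mulrDl S) (@mulrDr S) (@mulrA S)) (Hv y _) Hgs'.
      by exists [:: y]; split; [move=> z; rewrite inE => /eqP ->|exact: (lspan_self (@mul1r S))].
    + exact: JS.
move=> [I [N [Hsimp Hds]]] _ _.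
have [gs [_ Hgs]] := fin_gen_list (fun (a b : S) (x : M) => scalerDl x a b) HMfin.
pose P := fun t : M => exists L : seq M, (forall x, x \in L -> barM x) /\
               lspan *:%R (fun _ => True) L t.
have sDl : forall (a b : S) (x : M), (a + b) *: x = a *: x + b *: x.
  by move=> a b x; rewrite scalerDl.
have sDr : forall (a : S) (x y : M), a *: (x + y) = a *: x + a *: y.
  by move=> a x1 x2; rewrite scalerDr.
have sA : forall (a b : S) (x : M), a *: (b *: x) = (a * b) *: x.
  by move=> a b x; rewrite scalerA.
have s1 : forall (x : M), (1 : S) *: x = x by move=> x; rewrite scale1r.
have P0 : P 0 by exists [::].
have PD : forall a b, P a -> P b -> P (a + b).
  move=> x1 x2 [L1 [H1 Hx]] [L2 [H2 Hy]]; exists (L1 ++ L2); split.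
    by move=> z; rewrite mem_cat => /orP [/H1|/H2].
  exact: lspan_cat.
have PM : forall (r : S) a, P a -> P (r *: a).
  move=> r x1 [L [HL Hx]]; exists L; split => //.
  exact: (lspanM sDr sA).
have PG : forall t, P t -> lspan *:%R (fun _ => True) gs t.
  by move=> t _; apply: Hgs.
have [L [HL1 HL2]] := noeth_mod sDl sDr sA s1 HSnoeth P0 PD PM PG.
have [LL [HLL HL']] := collect sDl HL1.
exists LL; split; first by move=> i; apply: HLL; exact: mem_nth.
move=> y Fy; apply/(lspan_fin *:%R (P := barS) LL y barS0).
apply: (liftM I N Hsimp Hds) => //.
apply: (lspan_sub sDl sDr sA) (HL2 y _) HL'.
by exists [:: y]; split; [move=> z; rewrite inE => /eqP ->|exact: (lspan_self s1)].
Qed.
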